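(* Consider a linear Gaussian covariance model given by $\mathcal G=(G_0,\dots,G_r)$ and suppose the sample covariance matrix satisfies $S_n\succ 0$. Then the log-likelihood $\ell:\Theta_{\mathcal G}\to\mathbb{R}$, $\ell(v)=-\frac n2\log\det\Sigma_v-\frac n2\mathrm{tr}(S_n\Sigma_v^{-1})$, is strictly concave on the convex set $\Delta_{2S_n}=\{v\in\Theta_{\mathcal G}: 0\prec\Sigma_v\prec 2S_n\}$. In particular, maximizing $\ell$ over $\Delta_{2S_n}$ is a convex optimization problem.
   Context: $\mathbb{S}^p$ denotes real symmetric $p\times p$ matrices with inner product $\langle A,B\rangle=\mathrm{tr}(AB)$, $\mathbb{S}^p_{\succ0}$ the positive definite ones, and $A\succ B$ means $A-B$ is positive definite. A linear Gaussian covariance model is specified by $G_0,G_1,\dots,G_r\in\mathbb{S}^p$ with $G_1,\dots,G_r$ linearly independent and $\mathrm{tr}(G_0G_i)=0$ for $i=1,\dots,r$; for $v\in\mathbb{R}^r$ put $\Sigma_v=G_0+\sum_{i=1}^r v_iG_i$, and the parameter space is $\Theta_{\mathcal G}=\{v\in\mathbb{R}^r:\Sigma_v\in\mathbb{S}^p_{\succ0}\}$ (assumed nonempty). Given observations $X_1,\dots,X_n\in\mathbb{R}^p$, $\bar X=\frac1n\sum X_i$ and $S_n=\frac1n\sum_{i=1}^n(X_i-\bar X)(X_i-\bar X)^T$. *)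

(* Defs.v *)
From Stdlib Require Import Reals ClassicalEpsilon FunctionalExtensionality.
From HB Require Import structures.
From mathcomp Require Import all_boot all_order all_algebra.

Set Implicit Arguments.
Unset Strict Implicit.
Unset Printing Implicit Defensive.

Definition Req_bool (x y : R) : bool := if Req_EM_T x y then true else false.

Lemma Req_boolP : Equality.axiom Req_bool.
Proof. move=> x y; rewrite /Req_bool; case: Req_EM_T => h; constructor => //. Qed.

HB.instance Definition _ := hasDecEq.Build R Req_boolP.

Definition R_find (P : pred R) (n : nat) : option R :=
  match excluded_middle_informative (exists x, P x) with
  | left h => Some (proj1_sig (constructive_indefinite_description _ h))
  | right _ => None
  end.

Lemma R_find_correct P n x : R_find P n = Some x -> P x.
Proof.
rewrite /R_find; case: excluded_middle_informative => // h [<-].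
exact: (proj2_sig (constructive_indefinite_description _ h)).
Qed.

Lemma R_find_complete (P : pred R) : (exists x, P x) -> exists n, R_find P n.
Proof. move=> h; exists 0%N; rewrite /R_find; case: excluded_middle_informative. by []. by []. Qed.

Lemma R_find_ext (P Q : pred R) : P =1 Q -> R_find P =1 R_find Q.
Proof. by move=> /functional_extensionality ->. Qed.

HB.instance Definition _ := hasChoice.Build R R_find_correct R_find_complete R_find_ext.

Lemma R_addA : associative Rplus. Proof. move=> x y z; by rewrite Rplus_assoc. Qed.
Lemma R_addC : commutative Rplus. Proof. exact: Rplus_comm. Qed.
Lemma R_add0 : left_id R0 Rplus. Proof. exact: Rplus_0_l. Qed.
Lemma R_addN : left_inverse R0 Ropp Rplus. Proof. exact: Rplus_opp_l. Qed.

HB.instance Definition _ := GRing.isZmodule.Build R R_addA R_addC R_add0 R_addN.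

Lemma R_mulA : associative Rmult. Proof. move=> x y z; by rewrite Rmult_assoc. Qed.
Lemma R_mulC : commutative Rmult. Proof. exact: Rmult_comm. Qed.
Lemma R_mul1 : left_id R1 Rmult. Proof. exact: Rmult_1_l. Qed.
Lemma R_mulDl : left_distributive Rmult Rplus.
Proof. move=> x y z; exact: Rmult_plus_distr_r. Qed.
Lemma R_one_neq0 : R1 != R0.
Proof. by apply/eqP; exact: R1_neq_R0. Qed.

HB.instance Definition _ :=
  GRing.Zmodule_isComNzRing.Build R R_mulA R_mulC R_mul1 R_mulDl R_one_neq0.

Lemma R_mulVf (x : R) : x != 0%R -> Rmult (Rinv x) x = R1.
Proof. by move=> /eqP h; apply: Rinv_l. Qed.
Lemma R_inv0 : Rinv R0 = R0. Proof. exact: Rinv_0. Qed.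

HB.instance Definition _ := GRing.ComNzRing_isField.Build R R_mulVf R_inv0.

Local Open Scope ring_scope.

Definition quadform (p : nat) (A : 'M[R]_p) (x : 'cV[R]_p) : R :=
  (x^T *m A *m x) 0 0.

Definition posdef (p : nat) (A : 'M[R]_p) : Prop :=
  A^T = A /\ forall x : 'cV[R]_p, x <> 0 -> Rlt 0%R (quadform A x).

Definition loewner_lt (p : nat) (A B : 'M[R]_p) : Prop := posdef (B - A).

Definition Sigma (p r : nat) (G0 : 'M[R]_p) (G : 'I_r -> 'M[R]_p)
  (v : 'I_r -> R) : 'M[R]_p :=
  G0 + \sum_(i < r) v i *: G i.

Definition Theta (p r : nat) (G0 : 'M[R]_p) (G : 'I_r -> 'M[R]_p)
  (v : 'I_r -> R) : Prop := posdef (Sigma G0 G v).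

Definition Delta2S (p r : nat) (G0 : 'M[R]_p) (G : 'I_r -> 'M[R]_p)
  (S : 'M[R]_p) (v : 'I_r -> R) : Prop :=
  Theta G0 G v /\ loewner_lt 0 (Sigma G0 G v) /\
  loewner_lt (Sigma G0 G v) (2%:R *: S).

Definition sample_mean (p n : nat) (X : 'I_n -> 'cV[R]_p) : 'cV[R]_p :=
  (n%:R)^-1 *: \sum_(i < n) X i.

Definition sample_cov (p n : nat) (X : 'I_n -> 'cV[R]_p) : 'M[R]_p :=
  (n%:R)^-1 *: \sum_(i < n)
     ((X i - sample_mean X) *m (X i - sample_mean X)^T).

Definition loglik (p r n : nat) (G0 : 'M[R]_p) (G : 'I_r -> 'M[R]_p)
  (S : 'M[R]_p) (v : 'I_r -> R) : R :=
  Rminus (Ropp (Rmult (Rdiv (INR n) 2) (ln (\det (Sigma G0 G v)))))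
         (Rmult (Rdiv (INR n) 2) (\tr (S *m invmx (Sigma G0 G v)))).

Definition convcomb (r : nat) (t : R) (v w : 'I_r -> R) : 'I_r -> R :=
  fun i => Rplus (Rmult t (v i)) (Rmult (Rminus 1 t) (w i)).

Definition convex_set (r : nat) (D : ('I_r -> R) -> Prop) : Prop :=
  forall v w t, D v -> D w -> Rle 0 t -> Rle t 1 -> D (convcomb t v w).

Definition strictly_concave_on (r : nat) (D : ('I_r -> R) -> Prop)
  (f : ('I_r -> R) -> R) : Prop :=
  forall v w t, D v -> D w -> v <> w -> Rlt 0 t -> Rlt t 1 ->
    Rlt (Rplus (Rmult t (f v)) (Rmult (Rminus 1 t) (f w)))
        (f (convcomb t v w)).

(* Main.v *)
Require Import Defs.
From Stdlib Require Import Reals Lra Psatz FunctionalExtensionality.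
From HB Require Import structures.
From mathcomp Require Import all_boot all_order all_algebra zify.
Set Implicit Arguments. Unset Strict Implicit. Unset Printing Implicit Defensive.
Import GRing.Theory.
Local Open Scope ring_scope.

Lemma RaddE (x y : R) : x + y = Rplus x y. Proof. by []. Qed.
Lemma RmulE (x y : R) : x * y = Rmult x y. Proof. by []. Qed.
Lemma RoppE (x : R) : - x = Ropp x. Proof. by []. Qed.
Lemma RsubE (x y : R) : x - y = Rminus x y. Proof. by []. Qed.
Lemma R0E : 0 = R0 :> R. Proof. by []. Qed.
Lemma R1E : 1 = R1 :> R. Proof. by []. Qed.
Lemma RinvE (x : R) : x^-1 = Rinv x. Proof. by []. Qed.
Ltac toR := rewrite ?RaddE ?RmulE ?RoppE ?RinvE ?R0E ?R1E;
  try match goal with |- ?a = ?b => change (@eq R a b) end.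

Lemma dpl_ext (f g : R -> R) x l : (forall y, f y = g y) ->
  derivable_pt_lim f x l -> derivable_pt_lim g x l.
Proof. by move=> /functional_extensionality ->. Qed.

Lemma dpl_const (c x : R) : derivable_pt_lim (fun _ => c) x 0.
Proof. exact: derivable_pt_lim_const. Qed.

Lemma dpl_id (x : R) : derivable_pt_lim (fun y => y) x 1.
Proof. exact: derivable_pt_lim_id. Qed.

Lemma dpl_add (f g : R -> R) x a b : derivable_pt_lim f x a -> derivable_pt_lim g x b ->
  derivable_pt_lim (fun y => f y + g y) x (a + b).
Proof. move=> ha hb; exact: (derivable_pt_lim_plus f g x a b ha hb). Qed.

Lemma dpl_mul (f g : R -> R) x a b : derivable_pt_lim f x a -> derivable_pt_lim g x b ->
  derivable_pt_lim (fun y => f y * g y) x (a * g x + f x * b).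
Proof. move=> ha hb; exact: (derivable_pt_lim_mult f g x a b ha hb). Qed.

Lemma dpl_opp (f : R -> R) x a : derivable_pt_lim f x a ->
  derivable_pt_lim (fun y => - f y) x (- a).
Proof. move=> ha; exact: (derivable_pt_lim_opp f x a ha). Qed.

Lemma dpl_sub (f g : R -> R) x a b : derivable_pt_lim f x a -> derivable_pt_lim g x b ->
  derivable_pt_lim (fun y => f y - g y) x (a - b).
Proof. by move=> ha hb; apply: dpl_add => //; apply: dpl_opp. Qed.

Lemma dpl_scal (c : R) (f : R -> R) x a : derivable_pt_lim f x a ->
  derivable_pt_lim (fun y => c * f y) x (c * a).
Proof.
move=> ha; apply: (dpl_ext (f := fun y => c * f y)) => // .
have := dpl_mul (dpl_const c x) ha; rewrite mul0r add0r; exact.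
Qed.

Lemma dpl_inv (f : R -> R) x a : derivable_pt_lim f x a -> f x <> 0 ->
  derivable_pt_lim (fun y => (f y)^-1) x (- a / (f x * f x)).
Proof.
move=> ha hx.
have H := derivable_pt_lim_div (fun _ => R1) f x R0 a (dpl_const R1 x) ha hx.
have E : Rdiv (Rminus (Rmult R0 (f x)) (Rmult a R1)) (Rsqr (f x)) = - a / (f x * f x).
  rewrite /Rsqr /Rdiv; toR; field; exact: hx.
rewrite E in H; apply: dpl_ext H => y; rewrite /div_fct /Rdiv; toR; ring.
Qed.

Lemma dpl_sum (I : Type) (s : seq I) (F : I -> R -> R) (F' : I -> R) x :
  (forall i, derivable_pt_lim (F i) x (F' i)) ->
  derivable_pt_lim (fun y => \sum_(i <- s) F i y) x (\sum_(i <- s) F' i).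
Proof.
move=> h; elim: s => [|i s IH].
  rewrite big_nil; apply: dpl_ext (dpl_const 0 x) => y; by rewrite big_nil.
rewrite big_cons; apply: dpl_ext (dpl_add (h i) IH) => y; by rewrite big_cons.
Qed.

Lemma dpl_prod (I : Type) (s : seq I) (F : I -> R -> R) :
  forall x, (forall i, exists d, derivable_pt_lim (F i) x d) ->
  exists d, derivable_pt_lim (fun y => \prod_(i <- s) F i y) x d.
Proof.
move=> x h; elim: s => [|i s [d IH]].
  exists 0; apply: dpl_ext (dpl_const 1 x) => y; by rewrite big_nil.
have [di hi] := h i.
eexists; apply: dpl_ext (dpl_mul hi IH) => y; by rewrite big_cons.
Qed.

Lemma dpl_poly (q : {poly R}) x : derivable_pt_lim (fun y => q.[y]) x (q^`().[x]).
Proof.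
elim/poly_ind: q => [|q c IH].
  rewrite deriv0 horner0; apply: dpl_ext (dpl_const 0 x) => y; by rewrite horner0.
rewrite derivMXaddC hornerD hornerM hornerX.
have := dpl_add (dpl_mul IH (dpl_id x)) (dpl_const c x).
rewrite mulr1 addr0 addrC; apply: dpl_ext => y.
by rewrite hornerMXaddC.
Qed.

Definition mder m n (F : R -> 'M[R]_(m,n)) (F' : 'M[R]_(m,n)) x :=
  forall i j, derivable_pt_lim (fun y => F y i j) x (F' i j).

Lemma mder_ext m n (F G : R -> 'M[R]_(m,n)) F' x : (forall y, F y = G y) ->
  mder F F' x -> mder G F' x.
Proof. by move=> /functional_extensionality ->. Qed.

Lemma mder_unique m n (F : R -> 'M[R]_(m,n)) A B x : mder F A x -> mder F B x -> A = B.
Proof. move=> hA hB; apply/matrixP => i j; exact: uniqueness_limite (hA i j) (hB i j). Qed.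

Lemma mder_const m n (A : 'M[R]_(m,n)) x : mder (fun _ => A) 0 x.
Proof. move=> i j; rewrite mxE; exact: dpl_const. Qed.

Lemma mder_add m n (F G : R -> 'M[R]_(m,n)) F' G' x : mder F F' x -> mder G G' x ->
  mder (fun y => F y + G y) (F' + G') x.
Proof.
move=> hF hG i j; rewrite mxE; apply: dpl_ext (dpl_add (hF i j) (hG i j)) => y.
by rewrite mxE.
Qed.

Lemma mder_opp m n (F : R -> 'M[R]_(m,n)) F' x : mder F F' x ->
  mder (fun y => - F y) (- F') x.
Proof.
move=> hF i j; rewrite mxE; apply: dpl_ext (dpl_opp (hF i j)) => y.
by rewrite mxE.
Qed.

Lemma mder_mul m n k (F : R -> 'M[R]_(m,n)) (G : R -> 'M[R]_(n,k)) F' G' x :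
  mder F F' x -> mder G G' x ->
  mder (fun y => F y *m G y) (F' *m G x + F x *m G') x.
Proof.
move=> hF hG i j; rewrite !mxE -big_split /=.
have := @dpl_sum _ (index_enum 'I_n) (fun l y => F y i l * G y l j)
  (fun l => F' i l * G x l j + F x i l * G' l j) x (fun l => dpl_mul (hF i l) (hG l j)).
by apply: dpl_ext => y; rewrite mxE.
Qed.

Lemma mder_scale m n (f : R -> R) (F : R -> 'M[R]_(m,n)) a F' x :
  derivable_pt_lim f x a -> mder F F' x ->
  mder (fun y => f y *: F y) (a *: F x + f x *: F') x.
Proof.
move=> hf hF i j; rewrite !mxE; apply: dpl_ext (dpl_mul hf (hF i j)) => y.
by rewrite mxE.
Qed.

Lemma mder_trace n (F : R -> 'M[R]_n) F' x : mder F F' x ->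
  derivable_pt_lim (fun y => \tr (F y)) x (\tr F').
Proof.
move=> hF; rewrite /mxtrace.
have := @dpl_sum _ (index_enum 'I_n) (fun i y => F y i i) (fun i => F' i i) x (fun i => hF i i).
by apply: dpl_ext.
Qed.

Lemma horner_char_poly n (A : 'M[R]_n) x : (char_poly A).[x] = \det (x%:M - A).
Proof.
rewrite /char_poly -horner_evalE -det_map_mx; congr (\det _); apply/matrixP => i j.
by rewrite !mxE /= horner_evalE hornerD hornerN hornerMn hornerX hornerC.
Qed.

Lemma det_shift n (M : 'M[R]_n) : exists Q : {poly R},
  (forall h, \det (1%:M + h *: M) = Q.[h]) /\ Q`_1 = \tr M.
Proof.
set K := char_poly (- M).
have szK : size K = n.+1 by rewrite size_char_poly.
have Kn : K`_n = 1.
  have := monicP (char_poly_monic (- M)); rewrite lead_coefE szK => //.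
exists (\sum_(j < n.+1) K`_j *: 'X^(n - j)); split.
  move=> h; rewrite horner_sum.
  under eq_bigr do rewrite hornerZ hornerXn.
  have [->|hn0] := eqVneq h 0.
    rewrite scale0r addr0 det1 big_ord_recr /= subnn expr0 mulr1 Kn big1 ?add0r //.
    move=> [j hj] _ /=; rewrite expr0n /= subn_eq0 leqNgt hj /=; by rewrite mulr0.
  have -> : 1%:M + h *: M = h *: (h^-1%:M - - M).
    by rewrite scalerDr opprK scale_scalar_mx mulfV.
  rewrite detZ -horner_char_poly horner_coef szK mulr_sumr; apply: eq_bigr => [[j hj]] _ /=.
  rewrite exprVn exprB ?unitfE // ?ltnS //.
  by rewrite mulrCA.
rewrite coef_sum.
under eq_bigr do rewrite coefZ coefXn.
have Ktr : (0 < n)%N -> K`_n.-1 = \tr M.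
  by move=> hn; rewrite /K char_poly_trace // raddfN opprK.
clearbody K; case: n M K szK Kn Ktr => [|m] M K szK KN Ktr.
  by rewrite big_ord1 /= mulr0 /mxtrace big_ord0.
rewrite big_ord_recr /= subnn /= mulr0 addr0 big_ord_recr /= subSnn /= mulr1 big1 ?add0r.
  exact: Ktr.
move=> [j hj] _ /=; suff -> : (1 == m.+1 - j)%N = false by rewrite mulr0.
apply/negbTE/eqP; lia.
Qed.

Lemma dpl_det n (B D : 'M[R]_n) t : (B + t *: D) \in unitmx ->
  derivable_pt_lim (fun s => \det (B + s *: D)) t
    (\det (B + t *: D) * \tr (invmx (B + t *: D) *m D)).
Proof.
set Ct := B + t *: D => hU.
have [Q [hQ hQ1]] := det_shift (invmx Ct *m D).
have E : forall s, \det Ct * (Q \Po ('X - t%:P)).[s] = \det (B + s *: D).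
  move=> s; rewrite horner_comp hornerXsubC -hQ -det_mulmx.
  rewrite mulmxDr mulmx1 -scalemxAr mulmxA mulmxV // mul1mx /Ct scalerBl.
  by rewrite -addrA (addrC (t *: D)) addrNK.
have := dpl_scal (\det Ct) (dpl_poly (Q \Po ('X - t%:P)) t).
rewrite deriv_comp derivXsubC mulr1 horner_comp hornerXsubC subrr horner_coef0.
by rewrite coef_deriv hQ1; apply: dpl_ext.
Qed.

Definition Cf n (B D : 'M[R]_n) (s : R) : 'M[R]_n := B + s *: D.
Definition Cp n (B D : 'M[R]_n) : 'M[{poly R}]_n :=
  map_mx polyC B + 'X *: map_mx polyC D.

Lemma Cp_eval n (B D : 'M[R]_n) s : map_mx (horner_eval s) (Cp B D) = Cf B D s.
Proof.
apply/matrixP => i j; rewrite /Cp /Cf !mxE /= horner_evalE hornerD hornerC.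
by rewrite hornerM hornerX hornerC.
Qed.

Lemma mder_adj n (B D : 'M[R]_n) t :
  mder (fun s => \adj (Cf B D s)) (map_mx (fun q => q^`().[t]) (\adj (Cp B D))) t.
Proof.
move=> i j; rewrite mxE.
apply: dpl_ext (dpl_poly (\adj (Cp B D) i j) t) => y.
by rewrite -Cp_eval -map_mx_adj [RHS]mxE /= ?horner_evalE.
Qed.

Lemma mder_Cf n (B D : 'M[R]_n) t : mder (Cf B D) D t.
Proof.
move=> i j; rewrite /Cf.
have := dpl_add (dpl_const (B i j) t) (dpl_mul (dpl_id t) (dpl_const (D i j) t)).
rewrite add0r mulr0 addr0 mul1r; apply: dpl_ext => y; by rewrite !mxE.
Qed.

Lemma mder_scalar n (f : R -> R) a t : derivable_pt_lim f t a ->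
  mder (fun s => (f s)%:M : 'M[R]_n) a%:M t.
Proof.
move=> hf i j; rewrite mxE; have [<-|ne] := eqVneq i j.
  by apply: dpl_ext hf => y; rewrite mxE eqxx.
apply: dpl_ext (dpl_const 0 t) => y; by rewrite mxE (negbTE ne).
Qed.

Definition Ninv n (B D : 'M[R]_n) (s : R) : 'M[R]_n :=
  (\det (Cf B D s))^-1 *: \adj (Cf B D s).

Lemma Ninv_inv n (B D : 'M[R]_n) s : Cf B D s \in unitmx -> Ninv B D s = invmx (Cf B D s).
Proof. by move=> hU; rewrite /invmx hU. Qed.

Lemma mder_Ninv n (B D : 'M[R]_n) t : Cf B D t \in unitmx ->
  mder (Ninv B D) (- (invmx (Cf B D t) *m D *m invmx (Cf B D t))) t.
Proof.
move=> hU.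
set Ct := Cf B D t; set N := invmx Ct; set d := \det Ct.
have hd : d != 0 by rewrite -unitfE -unitmxE.
have hP := dpl_det hU; rewrite -/Ct -/N -/d in hP.
set P' := d * \tr (N *m D) in hP.
set A' := map_mx (fun q : {poly R} => q^`().[t]) (\adj (Cp B D)).
have hA : A' *m Ct + \adj Ct *m D = P'%:M.
  apply: (mder_unique (F := fun s => \adj (Cf B D s) *m Cf B D s) (x := t)).
    exact: mder_mul (mder_adj B D t) (mder_Cf B D t).
  apply: mder_ext (mder_scalar (n:=n) hP) => s; by rewrite mul_adj_mx.
have hA' : A' = (P'%:M - \adj Ct *m D) *m N.
  by rewrite -hA addrK -mulmxA mulmxV // mulmx1.
have hadj : \adj Ct = d *: N by rewrite /N /invmx hU scalerA mulfV // scale1r.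
have H := mder_scale (dpl_inv (f := fun s => \det (Cf B D s)) hP (elimN eqP hd)) (mder_adj B D t).
have E : (- P' / (d * d)) *: \adj Ct + d^-1 *: A' = - (N *m D *m N).
  rewrite hA' hadj mulmxBl mul_scalar_mx -!scalemxAl scalerBr !scalerA mulVf // scale1r.
  have -> : - P' / (d * d) * d = - (d^-1 * P') by toR; field; apply/eqP.
  by rewrite scaleNr addKr.
by rewrite E in H.
Qed.

Lemma quadformD p (A B : 'M[R]_p) x : quadform (A + B) x = quadform A x + quadform B x.
Proof. by rewrite /quadform mulmxDr mulmxDl mxE. Qed.

Lemma quadformZ p a (A : 'M[R]_p) x : quadform (a *: A) x = a * quadform A x.
Proof. by rewrite /quadform -scalemxAr -scalemxAl mxE. Qed.

Lemma quadformN p (A : 'M[R]_p) x : quadform (- A) x = - quadform A x.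
Proof. by rewrite -scaleN1r quadformZ mulN1r. Qed.

Lemma quadform_congr p (E C : 'M[R]_p) x :
  quadform (E^T *m C *m E) x = quadform C (E *m x).
Proof. by rewrite /quadform trmx_mul !mulmxA. Qed.

Lemma posdef_conv p (A B : 'M[R]_p) t : posdef A -> posdef B -> Rle 0 t -> Rle t 1 ->
  posdef (t *: A + (1 - t) *: B).
Proof.
move=> [hAs hA] [hBs hB] h0 h1; split.
  by rewrite linearD !linearZ /= hAs hBs.
move=> x hx; rewrite quadformD !quadformZ.
have := hA x hx; have := hB x hx; toR; nra.
Qed.

Lemma posdef_unit p (E C : 'M[R]_p) : E \in unitmx -> posdef C -> posdef (E^T *m C *m E).
Proof.
move=> hE [hCs hC]; split.
  by rewrite !trmx_mul trmxK hCs mulmxA.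
move=> x hx; rewrite quadform_congr; apply: hC => h0; apply: hx.
by rewrite -(mulKmx hE x) h0 mulmx0.
Qed.

Lemma chol p (C : 'M[R]_p) : posdef C -> exists L, L \in unitmx /\ C = L^T *m L.
Proof.
elim: p C => [|p IH] C hC.
  exists 1%:M; split; first by rewrite unitmx1.
  by apply/matrixP => -[].
move: C hC; rewrite -[p.+1]/(1 + p)%N => C hC.
have [hCs hCq] := hC.
set a1 := ulsubmx C; set c := dlsubmx C; set C' := drsubmx C.
have hur : ursubmx C = c^T by rewrite /c trmx_dlsub hCs.
have hC's : C'^T = C' by rewrite /C' trmx_drsub hCs.
set al := a1 0 0.
have ha1 : a1 = al%:M by exact: mx11_scalar.
have hCb : C = block_mx (al%:M) c^T c C' by rewrite -ha1 -hur submxK.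
have hal : Rlt 0 al.
  have hx : col_mx (1%:M : 'M[R]_1) (0 : 'M[R]_(p,1)) <> 0.
    move=> h; have := congr1 (fun M : 'M[R]_(1 + p, 1) => M (lshift p 0) 0) h.
    rewrite col_mxEu !mxE /= => /eqP; by rewrite oner_eq0.
  have := hCq _ hx; rewrite hCb /quadform tr_col_mx trmx1 trmx0 mul_row_block.
  rewrite !mul1mx !mul0mx !addr0 mul_row_col mulmx1 mulmx0 addr0 mxE eqxx /=.
  by rewrite mulr1n.
have hal0 : al != 0 by apply/negP => /eqP h; rewrite h in hal; exact: (Rlt_irrefl _ hal).
set E : 'M[R]_(1 + p) := block_mx 1%:M (- (al^-1) *: c^T) 0 1%:M.
have hE : E \in unitmx by rewrite unitmxE det_ublock !det1 mulr1 unitr1.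
set C2 := C' - al^-1 *: (c *m c^T).
have hEC : E^T *m C *m E = block_mx (al%:M) 0 0 C2.
  rewrite hCb /E tr_block_mx !trmx1 trmx0 linearZ /= trmxK !mulmx_block.
  rewrite !mul1mx !mulmx1 !mul0mx !mulmx0 !addr0 ?add0r.
  have h1 : al%:M *m (- al^-1 *: c^T) + c^T = 0.
    by rewrite mul_scalar_mx scalerA mulrN mulfV // scaleN1r addNr.
  have h2 : (- al^-1 *: c) *m al%:M + c = 0.
    by rewrite mul_mx_scalar scalerA mulrN mulfV // scaleN1r addNr.
  by rewrite h1 h2 mul0mx add0r /C2 -scalemxAl scaleNr addrC.
have hpd := posdef_unit hE hC; rewrite hEC in hpd.
have [hbs hbq] := hpd.
have hC2 : posdef C2.
  split.
    by rewrite /C2 linearD linearN /= linearZ /= trmx_mul trmxK hC's.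
  move=> y hy.
  have hx : col_mx (0 : 'M[R]_(1,1)) y <> 0.
    by move/eqP; rewrite col_mx_eq0 => /andP [_ /eqP].
  have := hbq _ hx; rewrite /quadform tr_col_mx trmx0 mul_row_block.
  by rewrite !mul0mx !mulmx0 ?add0r ?addr0 mul_row_col mulmx0 add0r.
have [L2 [hL2 hC2e]] := IH C2 hC2.
set sa := sqrt al.
have hsa : Rlt 0 sa by apply: sqrt_lt_R0.
set L0 : 'M[R]_(1 + p) := block_mx (sa%:M : 'M_1) 0 0 L2.
have hL0 : L0^T *m L0 = block_mx (al%:M) 0 0 C2.
  rewrite /L0 tr_block_mx trmx0 tr_scalar_mx mulmx_block.
  rewrite !mul0mx !mulmx0 !addr0 !add0r mul_scalar_mx scale_scalar_mx -hC2e.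
  congr (block_mx _%:M _ _ _); [have H := sqrt_sqrt al (Rlt_le _ _ hal); exact H | by rewrite trmx0 mul0mx].
exists (L0 *m invmx E); split.
  rewrite unitmx_mul unitmx_inv hE andbT unitmxE det_ublock det_scalar1 unitfE.
  rewrite mulf_neq0 //; first by apply/negP => /eqP h; rewrite h in hsa; exact: (Rlt_irrefl _ hsa).
rewrite trmx_mul -mulmxA (mulmxA L0^T) hL0 -hEC mulmxK // !mulmxA -trmx_mul.
by rewrite mulmxV // trmx1 mul1mx.
Qed.

Lemma sumR_ge0 (I : finType) (P : pred I) (F : I -> R) :
  (forall i, Rle 0 (F i)) -> Rle 0 (\sum_(i | P i) F i).
Proof.
move=> h; apply: (big_ind (fun x : R => Rle 0 x)) => //.
  exact: Rle_refl.
by move=> x y hx hy; toR; lra.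
Qed.

Lemma quadform_ge0 p (P : 'M[R]_p) x : posdef P -> Rle 0 (quadform P x).
Proof.
move=> [_ hP]; have [->|hx] := eqVneq x 0.
  by rewrite /quadform mulmx0 mxE; exact: Rle_refl.
by apply: Rlt_le; apply: hP; apply/eqP.
Qed.

Lemma tr_quad_pos p (P Y : 'M[R]_p) : posdef P -> Y != 0 ->
  Rlt 0 (\tr (Y^T *m P *m Y)).
Proof.
move=> hP hY.
have E : forall k, (Y^T *m P *m Y) k k = quadform P (col k Y).
  move=> k; rewrite /quadform tr_col -row_mul; rewrite !mxE.
  apply: eq_bigr => l _; by rewrite !mxE.
have [k hk] : exists k, col k Y != 0.
  apply/existsP; move: hY; apply: contraR; rewrite negb_exists => /forallP h.
  apply/eqP/matrixP => i j; move: (h j); rewrite negbK => /eqP /matrixP /(_ i 0).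
  by rewrite !mxE.
rewrite /mxtrace (bigD1 k) //=; rewrite E.
have h1 : Rlt 0 (quadform P (col k Y)) by case: hP => _ hP; apply: hP; apply/eqP.
have h2 : Rle 0 (\sum_(i | i != k) (Y^T *m P *m Y) i i).
  apply: sumR_ge0 => i; rewrite E; exact: quadform_ge0.
exact: (Rplus_lt_le_0_compat _ _ h1 h2).
Qed.

Lemma posdef_unitmx p (C : 'M[R]_p) : posdef C -> C \in unitmx.
Proof.
move=> /chol [L [hL ->]]; by rewrite unitmx_mul unitmx_tr hL.
Qed.

Lemma posdef_det p (C : 'M[R]_p) : posdef C -> Rlt 0 (\det C).
Proof.
move=> /chol [L [hL ->]]; rewrite det_mulmx det_tr.
have : \det L != 0 by rewrite -unitfE -unitmxE.
move=> /eqP h; exact: (Rsqr_pos_lt _ h).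
Qed.

Lemma key_neg p (C S D : 'M[R]_p) : posdef C -> posdef (2%:R *: S - C) -> D^T = D -> D != 0 ->
  let N := invmx C in
  Rlt (\tr (N *m D *m N *m D))
      (\tr (S *m (N *m D *m N *m D *m N)) + \tr (S *m (N *m D *m N *m D *m N))).
Proof.
move=> hC hP hD hD0 N.
have hU := posdef_unitmx hC.
have hNC : N *m C = 1%:M by exact: mulVmx.
have hCN : C *m N = 1%:M by exact: mulmxV.
have hNs : N^T = N by rewrite /N trmx_inv; case: hC => -> _.
have [L [hL hCL]] := chol hC.
set F := N *m D *m N.
set X := N *m D *m N *m D *m N.
have hX : X = F *m C *m F.
  by rewrite /X /F !mulmxA -(mulmxA _ N C) hNC mulmx1.
have hCX : \tr (C *m X) = \tr (N *m D *m N *m D).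
  rewrite /X !mulmxA hCN mul1mx mxtrace_mulC !mulmxA.
  by [].
set Pm := 2%:R *: S - C.
have hPX : Rlt 0 (\tr (Pm *m X)).
  set Y := F *m L^T.
  have hY : L *m F = Y^T by rewrite /Y trmx_mul trmxK /F !trmx_mul hNs hD !mulmxA.
  have -> : Pm *m X = (Pm *m Y) *m (L *m F) by rewrite hX hCL /Y !mulmxA.
  rewrite mxtrace_mulC hY mulmxA.
  apply: tr_quad_pos => //.
  apply/negP => /eqP hY0.
  move/negP: hD0; apply; apply/eqP.
  have hF0 : F = 0.
    have hLT : L^T \in unitmx by rewrite unitmx_tr.
    by rewrite -(mulmxK hLT F) -/Y hY0 mul0mx.
  have : C *m F *m C = D by rewrite /F !mulmxA hCN mul1mx -mulmxA hNC mulmx1.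
  by rewrite hF0 mulmx0 mul0mx => <-.
move: hPX; rewrite /Pm mulmxBl mxtraceD raddfN /= -scalemxAl mxtraceZ hCX mulr_natl mulr2n.
rewrite /F; move: (\tr (S *m X)) (\tr (N *m D *m N *m D)) => b a h.
have h2 : Rlt 0 (Rplus (Rplus b b) (Ropp a)) := h.
change (Rlt a (Rplus b b)); lra.
Qed.

Definition gfun n (k : R) (S B D : 'M[R]_n) (s : R) : R :=
  Rminus (Ropp (Rmult k (ln (\det (Cf B D s))))) (Rmult k (\tr (S *m Ninv B D s))).

Definition g1fun n (k : R) (S B D : 'M[R]_n) (s : R) : R :=
  Rplus (Ropp (Rmult k (\tr (Ninv B D s *m D))))
        (Rmult k (\tr (S *m (Ninv B D s *m D *m Ninv B D s)))).

Lemma dg n k (S B D : 'M[R]_n) s : posdef (Cf B D s) ->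
  derivable_pt_lim (gfun k S B D) s (g1fun k S B D s).
Proof.
move=> hC; have hU := posdef_unitmx hC; have hdet := posdef_det hC.
have h1 := derivable_pt_lim_comp (fun s => \det (Cf B D s)) ln s _ _ (dpl_det hU)
   (derivable_pt_lim_ln _ hdet).
have h2 := mder_trace (mder_mul (mder_const S s) (mder_Ninv hU)).
have H := dpl_sub (dpl_opp (dpl_scal k h1)) (dpl_scal k h2).
set V := (X in derivable_pt_lim _ _ X) in H.
have -> : g1fun k S B D s = V.
  rewrite /V /g1fun Ninv_inv // mul0mx add0r mulmxN raddfN /= !mulmxA.
  have hd : \det (Cf B D s) <> R0 by move=> h; rewrite h in hdet; exact: (Rlt_irrefl _ hdet).
  move: hd; rewrite /Cf.
  move: (\det (B + s *: D)) (\tr (invmx (B + s *: D) *m D))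
        (\tr (S *m invmx (B + s *: D) *m D *m invmx (B + s *: D))) => a b c ha.
  toR; field; exact: ha.
exact: H.
Qed.

Lemma dg1 n k (S B D : 'M[R]_n) s : posdef (Cf B D s) ->
  let N := invmx (Cf B D s) in
  derivable_pt_lim (g1fun k S B D) s
    (Rmult k (Rminus (\tr (N *m D *m N *m D))
       (Rplus (\tr (S *m N *m D *m N *m D *m N)) (\tr (S *m N *m D *m N *m D *m N))))).
Proof.
move=> hC N; have hU := posdef_unitmx hC.
have hN := mder_Ninv hU.
have hND := mder_mul hN (mder_const D s).
have hNDN := mder_mul hND hN.
have hS := mder_mul (mder_const S s) hNDN.
have H := dpl_add (dpl_opp (dpl_scal k (mder_trace hND))) (dpl_scal k (mder_trace hS)).
set V := (X in derivable_pt_lim _ _ X) in H.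
suff -> : Rmult k (Rminus (\tr (N *m D *m N *m D))
       (Rplus (\tr (S *m N *m D *m N *m D *m N)) (\tr (S *m N *m D *m N *m D *m N)))) = V.
  exact: H.
rewrite /V Ninv_inv // -/N mulmx0 addr0 mul0mx add0r !mulNmx !mulmxN mulmxDr mxtraceD !raddfN /=.
rewrite !mulmxA.
move: (\tr (N *m D *m N *m D)) (\tr (S *m N *m D *m N *m D *m N)) => a b.
toR; ring.
Qed.

Lemma concave_main n k (S B D : 'M[R]_n) t :
  Rlt 0 k -> D^T = D -> D != 0 ->
  (forall s, Rle 0 s -> Rle s 1 -> posdef (Cf B D s) /\ posdef (2%:R *: S - Cf B D s)) ->
  Rlt 0 t -> Rlt t 1 ->
  Rlt (Rplus (Rmult t (gfun k S B D 1)) (Rmult (Rminus 1 t) (gfun k S B D 0)))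
      (gfun k S B D t).
Proof.
move=> hk hD hD0 hpos ht0 ht1.
pose g2 c := let N := invmx (Cf B D c) in
  Rmult k (Rminus (\tr (N *m D *m N *m D))
       (Rplus (\tr (S *m N *m D *m N *m D *m N)) (\tr (S *m N *m D *m N *m D *m N)))).
have hdg : forall c, Rle 0 c /\ Rle c 1 -> derivable_pt_lim (gfun k S B D) c (g1fun k S B D c).
  move=> c [h0 h1]; apply: dg; exact: (proj1 (hpos c h0 h1)).
have hdg1 : forall c, Rle 0 c /\ Rle c 1 -> derivable_pt_lim (g1fun k S B D) c (g2 c).
  move=> c [h0 h1]; exact: (dg1 k S (proj1 (hpos c h0 h1))).
have hneg : forall c, Rle 0 c -> Rle c 1 -> Rlt (g2 c) 0.
  move=> c h0 h1; have [hC hP] := hpos c h0 h1.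
  have := key_neg hC hP hD hD0; rewrite /g2 /= !mulmxA.
  move: (\tr _) (\tr _) => a b h; nra.
have [c1 [E1 [hc1a hc1b]]] := MVT_cor2 (gfun k S B D) (g1fun k S B D) 0 t ht0
  (fun c hc => hdg c (conj (proj1 hc) (Rle_trans _ _ _ (proj2 hc) (Rlt_le _ _ ht1)))).
have [c2 [E2 [hc2a hc2b]]] := MVT_cor2 (gfun k S B D) (g1fun k S B D) t 1 ht1
  (fun c hc => hdg c (conj (Rle_trans _ _ _ (Rlt_le _ _ ht0) (proj1 hc)) (proj2 hc))).
have hc12 : Rlt c1 c2 by lra.
have [c3 [E3 [hc3a hc3b]]] := MVT_cor2 (g1fun k S B D) g2 c1 c2 hc12
  (fun c hc => hdg1 c (conj (Rle_trans _ _ _ (Rlt_le _ _ hc1a) (proj1 hc))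
                            (Rle_trans _ _ _ (proj2 hc) (Rlt_le _ _ hc2b)))).
have h3 := hneg c3 (Rlt_le _ _ (Rlt_trans _ _ _ hc1a hc3a))
                   (Rlt_le _ _ (Rlt_trans _ _ _ hc3b hc2b)).
have hlt : Rlt (g1fun k S B D c2) (g1fun k S B D c1) by nra.
have htt : Rlt 0 (Rmult t (Rminus 1 t)) by nra.
nra.
Qed.

Lemma Sigma_conv p r (G0 : 'M[R]_p) (G : 'I_r -> 'M[R]_p) v w t :
  Sigma G0 G (convcomb t v w) = t *: Sigma G0 G v + (1 - t) *: Sigma G0 G w.
Proof.
rewrite /Sigma /convcomb !scalerDr !scaler_sumr.
have -> : \sum_(i < r) (Rplus (Rmult t (v i)) (Rmult (Rminus 1 t) (w i))) *: G i =
   \sum_(i < r) t *: (v i *: G i) + \sum_(i < r) (1 - t) *: (w i *: G i).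
  rewrite -big_split; apply: eq_bigr => i _.
  by rewrite [LHS]scalerDl !scalerA.
set X := \sum_(i < r) _; set Y := \sum_(i < r) _.
have E : G0 = t *: G0 + (1 - t) *: G0 by rewrite -scalerDl addrCA subrr addr0 scale1r.
rewrite {1}E -!addrA; congr (_ + _); exact: addrCA.
Qed.

Lemma conv_sub p (T A B : 'M[R]_p) t :
  T - (t *: A + (1 - t) *: B) = t *: (T - A) + (1 - t) *: (T - B).
Proof.
rewrite !scalerBr addrACA -scalerDl (addrC t) subrK scale1r opprD.
by [].
Qed.

Lemma Delta_convex p r (G0 : 'M[R]_p) (G : 'I_r -> 'M[R]_p) S :
  convex_set (Delta2S G0 G S).
Proof.
move=> v w t [hv1 [hv2 hv3]] [hw1 [hw2 hw3]] ht0 ht1.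
rewrite /Delta2S /Theta /loewner_lt Sigma_conv !subr0 conv_sub.
have h1 := posdef_conv hv1 hw1 ht0 ht1.
split => //; split => //.
by apply: posdef_conv.
Qed.

Lemma loglik_gfun p r n (G0 : 'M[R]_p) (G : 'I_r -> 'M[R]_p) S B D u s :
  Sigma G0 G u = Cf B D s -> posdef (Cf B D s) ->
  loglik n G0 G S u = gfun (Rdiv (INR n) 2) S B D s.
Proof.
move=> hE hC; rewrite /loglik /gfun hE Ninv_inv //; exact: posdef_unitmx.
Qed.

Theorem mainTheorem2 (p r n : nat) (G0 : 'M[R]_p) (G : 'I_r -> 'M[R]_p)
  (X : 'I_n -> 'cV[R]_p)
  (hG0sym : (G0^T)%R = G0)
  (hGsym : forall i, ((G i)^T)%R = G i)
  (hGindep : forall c : 'I_r -> R,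
      (\sum_(i < r) c i *: G i)%R = 0%R -> forall i, c i = 0%R)
  (hGorth : forall i, (\tr (G0 *m G i))%R = 0%R)
  (hTheta : exists v, Theta G0 G v)
  (hS : posdef (sample_cov X)) :
  convex_set (Delta2S G0 G (sample_cov X)) /\
  strictly_concave_on (Delta2S G0 G (sample_cov X))
    (loglik n G0 G (sample_cov X)).
Proof.
split; first exact: Delta_convex.
move=> v w t hv hw hvw ht0 ht1.
set B := Sigma G0 G w; set D := Sigma G0 G v - Sigma G0 G w.
have hCf : forall s, Sigma G0 G (convcomb s v w) = Cf B D s.
  move=> s; rewrite Sigma_conv /Cf /D /B scalerBr scalerBl scale1r [LHS]addrCA.
  by [].
have hSv : Sigma G0 G v = Cf B D 1 by rewrite /Cf /D scale1r addrC subrK.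
have hSw : Sigma G0 G w = Cf B D 0 by rewrite /Cf scale0r addr0.
have hpos : forall s, Rle 0 s -> Rle s 1 ->
    posdef (Cf B D s) /\ posdef (2%:R *: sample_cov X - Cf B D s).
  move=> s h0 h1; have := Delta_convex hv hw h0 h1.
  by rewrite /Delta2S /Theta /loewner_lt hCf => -[h2 [_ h3]].
have hDs : D^T = D.
  case: hv => [[hv _] _]; case: hw => [[hw _] _].
  by rewrite /D linearB /= hv hw.
have hD0 : D != 0.
  apply/negP => /eqP h; apply: hvw; apply: functional_extensionality => i.
  have hsum : \sum_(i < r) (v i - w i) *: G i = 0.
    apply: (etrans _ h); rewrite /D /Sigma.
    under eq_bigr do rewrite scalerBl.
    by rewrite big_split /= sumrN opprD addrACA subrr add0r.
  have h' := hGindep _ hsum i.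
  by apply/eqP; rewrite -subr_eq0; apply/eqP.
have hn : (0 < n)%N.
  case: n X hS {hv hw hpos} => // X hS; exfalso.
  have : [exists i, exists j, D i j != 0].
    apply: contraR hD0 => /existsPn h; apply/eqP/matrixP => i j.
    move/existsPn: (h i) => /(_ j); rewrite negbK => /eqP ->; by rewrite mxE.
  case/existsP => i _.
  have hx : (delta_mx i 0 : 'cV[R]_p) <> 0.
    move=> /matrixP /(_ i 0); rewrite !mxE !eqxx /= => /eqP; by rewrite oner_eq0.
  case: hS => _ /(_ _ hx).
  rewrite /sample_cov big_ord0 scaler0 /quadform mulmx0 mul0mx mxE.
  exact: Rlt_irrefl.
have hk : Rlt 0 (Rdiv (INR n) 2).
  apply: Rdiv_lt_0_compat; last by lra.
  by apply: lt_0_INR; apply/ltP.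
have H := concave_main hk hDs hD0 hpos ht0 ht1.
have hpt := proj1 (hpos t (Rlt_le _ _ ht0) (Rlt_le _ _ ht1)).
have hp1 := proj1 (hpos R1 Rle_0_1 (Rle_refl R1)).
have hp0 := proj1 (hpos R0 (Rle_refl R0) Rle_0_1).
rewrite (loglik_gfun n (sample_cov X) hSv hp1) (loglik_gfun n (sample_cov X) hSw hp0).
rewrite (loglik_gfun n (sample_cov X) (hCf t) hpt).
exact: H.
Qed.
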